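(* Let $p\ge 3$ be odd and let $\pi=\langle u,v\mid u^p=v^{2p+1}\rangle$ be the group of the $(p,2p+1)$ torus knot, with meridian $m=u^nv^{-k}$ and longitude $l=v^{2p+1}m^{-p(2p+1)}$, where $k,n\in\mathbb{Z}$ satisfy $-pk+(2p+1)n=1$. If $X,Y\in H[\pi]$ are the images of $m,l$, then $Y\in H^+[\pi][X^{\pm1}]$.
   Context: For a group $\pi$, the Brumfiel–Hilden algebra is $H[\pi]:=\mathbb{C}[\pi]/I$, where $I$ is the two-sided ideal of the group algebra generated by all elements $g(h+h^{-1})-(h+h^{-1})g$ with $g,h\in\pi$. $H^+[\pi]\subset H[\pi]$ is the subalgebra generated by the images of all $g+g^{-1}$, $g\in\pi$. For an element $X\in H[\pi]$ which is the image of a group element, $H^+[\pi][X^{\pm1}]$ denotes the subalgebra of $H[\pi]$ generated by $H^+[\pi]$, $X$ and $X^{-1}$. *)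

(* Defs.v *)
From HB Require Import structures.
From mathcomp Require Import all_boot all_order all_algebra all_field.
Set Implicit Arguments. Unset Strict Implicit. Unset Printing Implicit Defensive.
Import Order.TTheory GRing.Theory Num.Theory.
Local Open Scope ring_scope.

(* Words in the generators u, v of pi = < u, v | u^p = v^(2p+1) >.
   A word denotes an element of pi. *)
Inductive gword : Type :=
  | gone : gword
  | gu : gword
  | gv : gword
  | gmul : gword -> gword -> gword
  | ginv : gword -> gword.

Fixpoint gpown (w : gword) (n : nat) : gword :=
  match n with O => gone | S n' => gmul w (gpown w n') end.

Definition gpowz (w : gword) (z : int) : gword :=
  match z with Posz n => gpown w n | Negz n => ginv (gpown w n.+1) end.

Definition meridian (k n : int) : gword := gmul (gpowz gu n) (gpowz gv (- k)).
Definition longitude (p : nat) (k n : int) : gword :=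
  gmul (gpown gv (2 * p + 1)%N) (gpowz (meridian k n) (- ((p * (2 * p + 1))%N : int))).

(* Evaluation of a word under the representation u |-> U, v |-> V of pi into
   the units of an algebra A (Ui, Vi the inverses): returns (image, inverse of image). *)
Fixpoint geval (A : algType algC) (U Ui V Vi : A) (w : gword) : A * A :=
  match w with
  | gone => (1, 1)
  | gu => (U, Ui)
  | gv => (V, Vi)
  | gmul a b => let: (x, xi) := geval U Ui V Vi a in
                let: (y, yi) := geval U Ui V Vi b in (x * y, yi * xi)
  | ginv a => let: (x, xi) := geval U Ui V Vi a in (xi, x)
  end.

(* An algebra homomorphism from H[pi] to A is the same as a representation
   of pi into units of A satisfying the defining relations of H[pi]. *)
Definition BH_rep (p : nat) (A : algType algC) (U Ui V Vi : A) : Prop :=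
  [/\ U * Ui = 1 /\ Ui * U = 1, V * Vi = 1 /\ Vi * V = 1,
      U ^+ p = V ^+ (2 * p + 1)%N &
      (forall g h : gword,
        let gg := (geval U Ui V Vi g).1 in
        let s := (geval U Ui V Vi h).1 + (geval U Ui V Vi h).2 in
        gg * s = s * gg) ].

(* Formal expressions in the generators of the subalgebra H^+[pi][X^{+-1}]:
   the elements g + g^{-1} (g in pi), X, X^{-1}, closed under algebra operations. *)
Inductive hterm : Type :=
  | hX : hterm
  | hXinv : hterm
  | hplus : gword -> hterm
  | hscal : algC -> hterm
  | hadd : hterm -> hterm -> hterm
  | hmul : hterm -> hterm -> hterm.

Fixpoint heval (A : algType algC) (U Ui V Vi : A) (X Xi : A) (t : hterm) : A :=
  match t with
  | hX => X
  | hXinv => Xi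
  | hplus g => (geval U Ui V Vi g).1 + (geval U Ui V Vi g).2
  | hscal c => c%:A
  | hadd a b => heval U Ui V Vi X Xi a + heval U Ui V Vi X Xi b
  | hmul a b => heval U Ui V Vi X Xi a * heval U Ui V Vi X Xi b
  end.

(* Main.v *)
Require Import Defs.
From HB Require Import structures.
From mathcomp Require Import all_boot all_order all_algebra all_field.
From mathcomp Require Import zify ring.
Import GRing.Theory.
Local Open Scope ring_scope.
Set Implicit Arguments.
Section Zp.
Variable R : pzRingType.
Definition zp (x xi : R) (z : int) : R :=
  match z with Posz n => x ^+ n | Negz n => xi ^+ n.+1 end.
Variables x xi : R.
Hypothesis h1 : x * xi = 1.
Hypothesis h2 : xi * x = 1.
Lemma zpS z : zp x xi (z + 1) = zp x xi z * x.
Proof.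
case: z => [m|[|m]].
- by rewrite -PoszD addn1 /= exprSr.
- by rewrite /= expr1 h2.
- have -> : Negz m.+1 + 1 = Negz m by rewrite !NegzE; lia.
  by rewrite /= [in RHS]exprSr -mulrA h2 mulr1.
Qed.
Lemma zpP z : zp x xi (z - 1) = zp x xi z * xi.
Proof.
case: z => [[|m]|m].
- by rewrite /= expr1 mul1r.
- have -> : Posz m.+1 - 1 = Posz m by lia.
  by rewrite /= [in RHS]exprSr -mulrA h1 mulr1.
- have -> : Negz m - 1 = Negz m.+1 by rewrite !NegzE; lia.
  by rewrite /= [in LHS]exprSr.
Qed.
Lemma zpD a b : zp x xi (a + b) = zp x xi a * zp x xi b.
Proof.
elim/int_rect: b a => [|m IH|m IH] a.
- by rewrite addr0 /= mulr1.
- have -> : a + m.+1 = (a + m) + 1 by lia.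
  rewrite zpS IH -mulrA -zpS. congr (_ * _); congr zp; lia.
- have -> : a - Posz m.+1 = (a - Posz m) - 1 by lia.
  rewrite zpP IH -mulrA -zpP. congr (_ * _). congr zp. lia.
Qed.
Lemma zpX a m : zp x xi a ^+ m = zp x xi (a * m%:Z).
Proof.
elim: m => [|m IH]; first by rewrite mulr0 expr0.
rewrite exprSr IH -zpD. congr zp. lia.
Qed.
Lemma zpN z : zp x xi (- z) = zp xi x z.
Proof. by case: z => [[|m]|m]; rewrite /= ?expr0. Qed.
End Zp.
Arguments zp {R}.
Section EC.
Variable R : pzRingType.
Variable e : R.
Lemma ec1 (a b : R) : GRing.comm e a -> GRing.comm e b -> e*(a*b) = e*(b*a) ->
  forall j, e*(a*b^+j) = e*(b^+j*a).
Proof.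
move=> ea eb hab; elim=> [|j IH]; first by rewrite expr0 mulr1 mul1r.
rewrite exprS !mulrA -(mulrA e a b) hab mulrA eb -!mulrA IH.
by rewrite !mulrA -eb.
Qed.
Lemma ec_pow (a b : R) : GRing.comm e a -> GRing.comm e b -> e*(a*b) = e*(b*a) ->
  forall i j, e*(a^+i*b^+j) = e*(b^+j*a^+i).
Proof.
move=> ea eb hab i j.
have h1 := ec1 ea eb hab j.
have ebj : GRing.comm e (b^+j) by apply: commrX.
by rewrite (ec1 ebj ea (esym h1) i).
Qed.
Lemma ec_inv (a ai b : R) : GRing.comm e a -> GRing.comm e ai -> a * ai = 1 -> ai * a = 1 ->
  e*(a*b) = e*(b*a) -> e*(ai*b) = e*(b*ai).
Proof.
move=> ea eai h1 h2 hab.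
rewrite -[e*(b*ai)]mul1r -h2 -mulrA (mulrA a e) -ea -(mulrA e a).
rewrite (mulrA a b ai) (mulrA e (a*b) ai) hab -(mulrA e (b*a) ai) -(mulrA b a ai) h1 mulr1.
by rewrite !mulrA eai.
Qed.
Lemma ec_prod (a b : R) : GRing.comm e a -> GRing.comm e b -> e*(a*b) = e*(b*a) ->
  forall m, e*(a*b)^+m = e*(a^+m*b^+m).
Proof.
move=> ea eb hab; elim=> [|m IH]; first by rewrite !expr0 !mulr1.
have eam : GRing.comm e (a^+m) by apply: commrX.
rewrite exprSr mulrA IH.
have key : e*(b^+m*a) = e*(a*b^+m) := esym (ec1 ea eb hab m).
transitivity (a^+m * (e*(b^+m*a)) * b); first by rewrite !mulrA eam.
by rewrite key !exprSr !mulrA eam.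
Qed.

End EC.

Section Chb.
Variable R : pzRingType.
Fixpoint chb (c : R) (j : nat) : R * R :=
  match j with O => (0, -1) | S j => let: (a, b) := chb c j in (a * c - b, a) end.
Lemma chbS c j : chb c j.+1 = ((chb c j).1 * c - (chb c j).2, (chb c j).1).
Proof. by rewrite /=; case: (chb c j). Qed.
Lemma chb_comm y c : GRing.comm y c -> forall j, GRing.comm y (chb c j).1 /\ GRing.comm y (chb c j).2.
Proof.
move=> yc; elim=> [|j [IH1 IH2]]; first by split; [apply: commr0 | apply: commrN1].
rewrite chbS /=; split => //.
by apply: commrB => //; apply: commrM.
Qed.
Lemma chb_pow (U Ui : R) : Ui * U = 1 -> forall j,
  U ^+ j = (chb (U + Ui) j).1 * U - (chb (U + Ui) j).2.
Proof.
move=> h; elim=> [|j IH]; first by rewrite expr0 /= mul0r sub0r opprK.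
rewrite exprSr IH chbS /= mulrBl -mulrA.
have -> : U * U = (U + Ui) * U - 1 by rewrite mulrDl h addrK.
rewrite mulrBr mulr1 mulrA. by rewrite [in RHS]mulrBl addrAC.
Qed.
End Chb.
Arguments chb {R}.
Arguments chb_pow {R U Ui}.
Arguments chb_comm {R y c}.
Arguments ec1 {R e a b}.
Arguments ec_pow {R e a b}.
Arguments ec_inv {R e a ai b}.
Arguments ec_prod {R e a b}.
Arguments zpD {R x xi}.
Arguments zpX {R x xi}.
Arguments zpS {R x xi}.
Arguments zpP {R x xi}.
Arguments zpN {R}.

Section Geval.
Variable A : algType algC.
Variables U Ui V Vi : A.

Lemma geval_mul a b : geval U Ui V Vi (gmul a b) =
  ((geval U Ui V Vi a).1 * (geval U Ui V Vi b).1, (geval U Ui V Vi b).2 * (geval U Ui V Vi a).2).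
Proof. by rewrite /=; case: (geval U Ui V Vi a) => x xi; case: (geval U Ui V Vi b). Qed.

Lemma geval_pown w m : geval U Ui V Vi (gpown w m) =
  ((geval U Ui V Vi w).1 ^+ m, (geval U Ui V Vi w).2 ^+ m).
Proof.
elim: m => [|m IH] /=; first by rewrite !expr0.
rewrite IH; case: (geval U Ui V Vi w) => x xi /=.
by rewrite exprS exprSr.
Qed.

Lemma geval_powz w z : geval U Ui V Vi (gpowz w z) =
  (zp (geval U Ui V Vi w).1 (geval U Ui V Vi w).2 z, zp (geval U Ui V Vi w).2 (geval U Ui V Vi w).1 z).
Proof.
have gi : forall a, geval U Ui V Vi (ginv a) = ((geval U Ui V Vi a).2, (geval U Ui V Vi a).1).
  by move=> a /=; case: (geval U Ui V Vi a).
by case: z => m; rewrite /gpowz ?gi geval_pown.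
Qed.
End Geval.

Fixpoint hpow (t : hterm) (m : nat) : hterm :=
  match m with O => hscal 1 | S m => hmul t (hpow t m) end.

Fixpoint hchb (j : nat) : hterm * hterm :=
  match j with
  | O => (hscal 0, hscal (-1))
  | S j => let: (a, b) := hchb j in (hadd (hmul a (hplus gu)) (hmul (hscal (-1)) b), a)
  end.

Section Heval.
Variable A : algType algC.
Variables U Ui V Vi X Xi : A.
Lemma heval_pow t m : heval U Ui V Vi X Xi (hpow t m) = heval U Ui V Vi X Xi t ^+ m.
Proof. by elim: m => [|m IH] /=; rewrite ?scale1r // IH exprS. Qed.
Lemma heval_chb j : heval U Ui V Vi X Xi (hchb j).1 = (chb (U + Ui) j).1 /\
                    heval U Ui V Vi X Xi (hchb j).2 = (chb (U + Ui) j).2.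
Proof.
elim: j => [|j [IH1 IH2]] /=; first by rewrite scale0r scaleN1r.
case: (hchb j) IH1 IH2 => a b /= -> ->.
case: (chb (U + Ui) j) => a0 b0 /=.
by rewrite scaleN1r mulN1r.
Qed.
End Heval.

Definition tt_term (p : nat) : hterm :=
  hmul (hadd (hmul (hchb p).1 (hpow hX (2 * p + 1)%N)) (hmul (hscal (-1)) (hchb p).2))
       (hpow hXinv (p * (2 * p + 1))%N).

Lemma heval_tt (A : algType algC) (U Ui V Vi X Xi : A) p :
  heval U Ui V Vi X Xi (tt_term p) =
  ((chb (U + Ui) p).1 * X ^+ (2 * p + 1)%N - (chb (U + Ui) p).2) * Xi ^+ (p * (2 * p + 1))%N.
Proof.
rewrite /tt_term /= !heval_pow /=.
have [-> ->] := @heval_chb A U Ui V Vi X Xi p.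
by rewrite scaleN1r mulN1r.
Qed.

Unset Implicit Arguments.
Theorem mainTheorem3 (p : nat) (k n : int) :
  (3 <= p)%N -> odd p ->
  - (p%:Z * k) + (2 * p + 1)%N%:Z * n = 1 ->
  exists t : hterm,
    forall (A : algType algC) (U Ui V Vi : A),
      BH_rep p U Ui V Vi ->
      let mX := geval U Ui V Vi (meridian k n) in
      heval U Ui V Vi mX.1 mX.2 t = (geval U Ui V Vi (longitude p k n)).1.
Proof.
move=> hp hodd hkn; exists (tt_term p) => A U Ui V Vi [[hU1 hU2] [hV1 hV2] hrel hc] mX.
rewrite heval_tt /mX /longitude /meridian.
rewrite !(geval_mul, geval_powz, geval_pown) /=.
rewrite [zp _ _ (- Posz _)]zpN /=.
congr (_ * _).
have zp_comm : forall (y x xi : A) z, GRing.comm y x -> GRing.comm y xi -> GRing.comm y (zp x xi z).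
  by move=> y x xi [j|j] h1 h2 /=; apply: commrX.
move: (hc gv gu) (hc (ginv gv) gu) (hc gu gu) (hc (ginv gu) gu) => /= cV cVi cU cUi.
have hz : U^+p * V = V * U^+p by rewrite hrel -exprSr -exprS.
rewrite -hrel !(chb_pow hU2 p).
rewrite (chb_pow hU2 p) in hz.
have [eV bV] := chb_comm cV p.
have [eVi _] := chb_comm cVi p.
have [eU _] := chb_comm cU p.
have [eUi _] := chb_comm cUi p.
move: (chb (U + Ui) p).1 (chb (U + Ui) p).2 eV bV eVi eU eUi hz => e b eV bV eVi eU eUi hz.
move/commr_sym: eV => eV; move/commr_sym: eVi => eVi; move/commr_sym: eU => eU; move/commr_sym: eUi => eUi.
rewrite mulrBl mulrBr bV in hz.
move/addIr: hz; rewrite mulrA -eV -!mulrA => b1.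
congr (_ - _).
have b2 := ec_inv eU eUi hU1 hU2 b1.
have b3 := ec_inv eV eVi hV1 hV2 (esym b1).
have b4 := ec_inv eV eVi hV1 hV2 (esym b2).
have ePQ : forall z1 z2, e * (zp U Ui z1 * zp V Vi z2) = e * (zp V Vi z2 * zp U Ui z1).
  move=> [i|i] [j|j] /=.
  - exact: ec_pow eU eV b1 i j.
  - exact: ec_pow eU eVi (esym b3) i j.+1.
  - exact: ec_pow eUi eV b2 i.+1 j.
  - exact: ec_pow eUi eVi (esym b4) i.+1 j.+1.
rewrite (ec_prod (zp_comm _ _ _ _ eU eUi) (zp_comm _ _ _ _ eV eVi) (ePQ _ _)).
rewrite (zpX hU1 hU2) (zpX hV1 hV2).
have h1 : U^+p * Ui^+p = 1.
  by rewrite -exprMn_comm ?hU1 ?expr1n // /GRing.comm hU1 hU2.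
have h2 : Vi^+(2 * p + 1) * V^+(2 * p + 1) = 1.
  by rewrite -exprMn_comm ?hV2 ?expr1n // /GRing.comm hV1 hV2.
have VmUp : Vi^+(2 * p + 1) = Ui^+p.
  by rewrite -[Vi^+(2 * p + 1)]mulr1 -h1 hrel mulrA h2 mul1r.
have zpVU : forall j, zp V Vi (j * (2 * p + 1)%N%:Z) = zp U Ui (j * p%:Z).
  elim/int_rect => [|j IH|j IH].
  - by rewrite !mul0r.
  - have -> : Posz j.+1 * (2 * p + 1)%N%:Z = j%:Z * (2 * p + 1)%N%:Z + (2 * p + 1)%N%:Z by lia.
    have -> : Posz j.+1 * p%:Z = j%:Z * p%:Z + p%:Z by lia.
    by rewrite (zpD hV1 hV2) (zpD hU1 hU2) IH /= hrel.
  - have -> : - Posz j.+1 * (2 * p + 1)%N%:Z = - j%:Z * (2 * p + 1)%N%:Z + - (2 * p + 1)%N%:Z by lia.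
    have -> : - Posz j.+1 * p%:Z = - j%:Z * p%:Z + - p%:Z by lia.
    by rewrite (zpD hV1 hV2) (zpD hU1 hU2) IH !zpN /= VmUp.
rewrite zpVU -(zpD hU1 hU2).
have -> : n * (2 * p + 1)%N%:Z + - k * p%:Z = 1 by lia.
by rewrite /= expr1.
Qed.
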